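(* Let $\mathcal{H}$ be a real Hilbert space, $f:\mathcal{H}\to\mathbb{R}$ $\mu$-strongly convex and $L$-smooth with $0<\mu<L<\infty$, $g:\mathcal{H}\to\mathbb{R}\cup\{+\infty\}$ convex, proper and lower semicontinuous, $q=\mu/L$, and $x^\star$ the unique minimizer of $f+g$. Let the Prox-ITEM iterates $z^k$, scalars $A_k$ and the quantities $\mathcal{V}_k$ be as defined in the context. Then for every $k\in\mathbb{N}_0$, $$(L+\mu A_{k+1})\|z^{k+1}-x^\star\|^2\le\mathcal{V}_k.$$
   Context: $\operatorname{Prox}^{\gamma}_g(x)=\operatorname{argmin}_z\big(g(z)+\frac{1}{2\gamma}\|x-z\|^2\big)$. Prox-ITEM from $x^0\in\mathcal{H}$: $A_0=0$, $z^0=x^0$, and for $k\ge0$: $A_{k+1}=\frac{(1+q)A_k+2(1+\sqrt{(1+A_k)(1+qA_k)})}{(1-q)^2}$, $\beta_k=\frac{A_k}{(1-q)A_{k+1}}$, $\delta_k=\sqrt{\frac{A_{k+1}}{1+qA_{k+1}}}$, $y^k=(1-\beta_k)z^k+\beta_kx^k$, $\bar z^{k+1}=(1-q\delta_k)z^k+q\delta_ky^k-\frac{\delta_k}{L}\nabla f(y^k)$, $z^{k+1}=\operatorname{Prox}^{\delta_k/L}_g(\bar z^{k+1})$, $x^{k+1}=y^k-\frac1L\nabla f(y^k)-\frac1{\delta_k}(\bar z^{k+1}-z^{k+1})$. Define $\mathcal{I}_f(x,y)=f(x)-f(y)-\langle\nabla f(y),x-y\rangle-\frac{\mu}{2}\|x-y\|^2-\frac{1}{2(L-\mu)}\|\nabla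 f(x)-\nabla f(y)-\mu(x-y)\|^2$ and $\mathcal{I}_g(x,y,s)=g(x)-g(y)-\langle s,x-y\rangle$. Let $s_g^k=L\delta_{k-1}^{-1}(\bar z^k-z^k)$ for $k\ge1$, $s_g^\star=-\nabla f(x^\star)$, and $\sigma_k=\sqrt{(1+A_k)(1+qA_k)}$. For $k\in\mathbb{N}_0$, $$\mathcal{V}_k=(1-q)A_k\mathcal{I}_f(y^{k-1},x^\star)+qA_k\mathcal{I}_g(x^\star,z^k,s_g^k)+(qA_k+1-\sigma_k)\mathcal{I}_g(z^k,x^\star,s_g^\star)+\frac{A_k}{2L}\|s_g^k-s_g^\star\|^2+(L+\mu A_k)\|z^k-x^\star\|^2,$$ with the conventions $y^{-1}=y^0$, $s_g^0=s_g^1$, $0\cdot(\pm\infty)=0$. *)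

(* Defs.v *)
From HB Require Import structures.
From mathcomp Require Import all_boot all_order all_algebra.
From mathcomp Require Import all_classical all_reals.
Import constructive_ereal.
Set Implicit Arguments. Unset Strict Implicit. Unset Printing Implicit Defensive.
Import Order.TTheory GRing.Theory Num.Theory.
Local Open Scope ring_scope.

Section Defs.
Variables (R : realType) (H : lmodType R) (ip : H -> H -> R).

Definition nrm (x : H) : R := Num.sqrt (ip x x).

Definition is_inner_product : Prop :=
  [/\ (forall x y, ip x y = ip y x),
      (forall a x y z, ip (a *: x + y) z = a * ip x z + ip y z),
      (forall x, 0 <= ip x x) &
      (forall x, ip x x = 0 -> x = 0)].

Definition is_complete : Prop :=
  forall u : nat -> H,
    (forall eps : R, 0 < eps -> exists N, forall m n, (N <= m)%N -> (N <= n)%N ->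
        nrm (u m - u n) < eps) ->
    exists l : H, forall eps : R, 0 < eps -> exists N, forall n, (N <= n)%N ->
        nrm (u n - l) < eps.

Definition is_hilbert : Prop := is_inner_product /\ is_complete.

Definition is_gradient (f : H -> R) (gf : H -> H) : Prop :=
  forall x (eps : R), 0 < eps -> exists2 d : R, 0 < d &
    forall h, nrm h < d -> `|f (x + h) - f x - ip (gf x) h| <= eps * nrm h.

Definition strongly_convex (mu : R) (f : H -> R) : Prop :=
  forall x y (t : R), 0 <= t <= 1 ->
    f (t *: x + (1 - t) *: y) <=
      t * f x + (1 - t) * f y - mu / 2 * t * (1 - t) * nrm (x - y) ^+ 2.

Definition L_smooth (L : R) (f : H -> R) (gf : H -> H) : Prop :=
  is_gradient f gf /\ forall x y, nrm (gf x - gf y) <= L * nrm (x - y).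

Definition no_minus_infty (g : H -> \bar R) : Prop := forall x, g x != -oo%E.
Definition proper_fun (g : H -> \bar R) : Prop := exists x, (g x < +oo)%E.
Definition convex_efun (g : H -> \bar R) : Prop :=
  forall x y (t : R), 0 <= t <= 1 ->
    (g (t *: x + (1 - t) *: y)%R <= t%:E * g x + (1 - t)%R%:E * g y)%E.
Definition lsc_efun (g : H -> \bar R) : Prop :=
  forall x (t : R), (t%:E < g x)%E -> exists2 d : R, 0 < d &
    forall y, nrm (y - x) < d -> (t%:E < g y)%E.

Definition is_prox (g : H -> \bar R) (gamma : R) (v p : H) : Prop :=
  forall u, (g p + ((2 * gamma)^-1 * nrm (v - p) ^+ 2)%:E <=
             g u + ((2 * gamma)^-1 * nrm (v - u) ^+ 2)%:E)%E.

Definition is_minimizer (F : H -> \bar R) (xs : H) : Prop :=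
  forall x, (F xs <= F x)%E.

Fixpoint Aseq (q : R) (k : nat) : R :=
  match k with
  | 0 => 0
  | k'.+1 => let a := Aseq q k' in
      ((1 + q) * a + 2 * (1 + Num.sqrt ((1 + a) * (1 + q * a)))) / (1 - q) ^+ 2
  end.
Definition beta (q : R) (k : nat) : R := Aseq q k / ((1 - q) * Aseq q k.+1).
Definition delta (q : R) (k : nat) : R :=
  Num.sqrt (Aseq q k.+1 / (1 + q * Aseq q k.+1)).
Definition sigma (q : R) (k : nat) : R :=
  Num.sqrt ((1 + Aseq q k) * (1 + q * Aseq q k)).

Variables (L mu : R) (gf : H -> H) (x z : nat -> H).
Let q := mu / L.

Definition yit (k : nat) : H := (1 - beta q k) *: z k + beta q k *: x k.
Definition zbar_next (k : nat) : H :=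
  (1 - q * delta q k) *: z k + (q * delta q k) *: yit k - (delta q k / L) *: gf (yit k).

Definition prox_item (g : H -> \bar R) : Prop :=
  [/\ z 0 = x 0,
      (forall k, is_prox g (delta q k / L) (zbar_next k) (z k.+1)) &
      (forall k, x k.+1 = yit k - L^-1 *: gf (yit k)
                          - (delta q k)^-1 *: (zbar_next k - z k.+1))].

(* s_g^k for k >= 1, with the convention s_g^0 = s_g^1 *)
Definition sg (k : nat) : H :=
  let k' := (k.-1)%N in L * (delta q k')^-1 *: (zbar_next k' - z k'.+1).
(* y^{k-1}, with the convention y^{-1} = y^0 *)
Definition yprev (k : nat) : H := yit (k.-1)%N.

Definition If (f : H -> R) (u v : H) : R :=
  f u - f v - ip (gf v) (u - v) - mu / 2 * nrm (u - v) ^+ 2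
  - (2 * (L - mu))^-1 * nrm (gf u - gf v - mu *: (u - v)) ^+ 2.
Definition Ig (g : H -> \bar R) (u v s : H) : \bar R :=
  (g u - g v - (ip s (u - v))%:E)%E.

(* Lyapunov quantity V_k (extended-real valued; 0 * (+-oo) = 0 in \bar R) *)
Definition Vk (f : H -> R) (g : H -> \bar R) (xs : H) (k : nat) : \bar R :=
  let A := Aseq q k in
  let sstar := - gf xs in
  (((1 - q) * A * If f (yprev k) xs)%:E
   + (q * A)%:E * Ig g xs (z k) (sg k)
   + (q * A + 1 - sigma q k)%:E * Ig g (z k) xs sstar
   + (A / (2 * L) * nrm (sg k - sstar) ^+ 2)%:E
   + ((L + mu * A) * nrm (z k - xs) ^+ 2)%:E)%E.

End Defs.

(* Main.v *)
Require Import Defs.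
From mathcomp Require Import all_boot all_order all_algebra.
From mathcomp Require Import all_classical all_reals.
From mathcomp Require Import ring lra.
Import Order.TTheory GRing.Theory Num.Theory.
Import constructive_ereal.
Local Open Scope ring_scope.

Section IP.
Variables (R : realType) (H : lmodType R) (ip : H -> H -> R).
Hypothesis ipC : forall u v, ip u v = ip v u.
Hypothesis ipL : forall a x y z, ip (a *: x + y) z = a * ip x z + ip y z.

Lemma ip0l v : ip 0 v = 0.
Proof.
have := ipL 1 0 0 v; rewrite scale1r addr0 mul1r => h.
by have := congr1 (fun t => t - ip 0 v) h; rewrite /= subrr addrK.
Qed.
Lemma ipDl u w v : ip (u + w) v = ip u v + ip w v.
Proof. by rewrite -{1}[u]scale1r ipL mul1r. Qed.
Lemma ipZl a u v : ip (a *: u) v = a * ip u v.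
Proof. by rewrite -[a *: u]addr0 ipL ip0l addr0. Qed.
Lemma ipNl u v : ip (- u) v = - ip u v.
Proof. by rewrite -scaleN1r ipZl mulN1r. Qed.
Lemma ipDr u w v : ip v (u + w) = ip v u + ip v w.
Proof. by rewrite ipC ipDl !(ipC v). Qed.
Lemma ipZr a u v : ip v (a *: u) = a * ip v u.
Proof. by rewrite ipC ipZl ipC. Qed.
Lemma ipNr u v : ip v (- u) = - ip v u.
Proof. by rewrite ipC ipNl ipC. Qed.

Ltac ipexp := rewrite ?(ipDl, ipDr, ipZl, ipZr, ipNl, ipNr).

Variables (L mu A P b d sg : R).
Let q := mu / L.
Hypotheses (hL : 0 < L) (hmu : 0 < mu) (hmuL : mu < L).
Hypotheses (hb : b = A / ((1 - q) * P)) (hP : P = d ^+ 2 / (1 - q * d ^+ 2))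
  (hA : A = d * ((1 - q) ^+ 2 * P - 4) / (d * (1 + q) + 2))
  (hs : sg = 1 + A / d) (hd : 0 < d) (hqd : 0 < 1 - q * d ^+ 2).

Definition Ifr (u gu : H) (fu : R) (v gv : H) (fv : R) : R :=
  fu - fv - ip gv (u - v) - mu / 2 * ip (u - v) (u - v)
  - (2 * (L - mu))^-1 * ip (gu - gv - mu *: (u - v)) (gu - gv - mu *: (u - v)).

Lemma core_eq (xs zk y_ gy_ s gy sp gs xk : H) (fy_ fy fs gz gz1 gx : R)
  (hxk : b *: xk = b *: (y_ - L^-1 *: gy_ - L^-1 *: s)) :
  let y := (1 - b) *: zk + b *: xk in
  let zk1 := (1 - q * d) *: zk + (q * d) *: y - (d / L) *: gy - (d / L) *: sp in
  let a := 2 * d * (1 + q * P) in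
  (1 - q) * A * Ifr y_ gy_ fy_ xs gs fs + q * A * (gx - gz - ip s (xs - zk))
  + (q * A + 1 - sg) * (gz - gx - ip (- gs) (zk - xs))
  + A / (2 * L) * ip (s - - gs) (s - - gs) + (L + mu * A) * ip (zk - xs) (zk - xs)
  - (L + mu * P) * ip (zk1 - xs) (zk1 - xs)
  = (1 - q) * A * Ifr y_ gy_ fy_ (y) gy fy + (1 - q) * P * Ifr y gy fy xs gs fs
    + (1 - q) * (P - A) * Ifr xs gs fs y gy fy
    + (sg - 1) * (gz1 - gz - ip s (zk1 - zk))
    + (a - sg + 1) * (gz1 - gx + ip gs (zk1 - xs))
    + a * (gx - gz1 - ip sp (xs - zk1))
    + A / (2 * L) * ip (s - sp) (s - sp) + (P - A / 2) / L * ip (sp + gs) (sp + gs).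
Proof.
move=> y zk1 a.
rewrite /zk1 /y /a /Ifr hxk; clear zk1 y a.
ipexp.
rewrite ?[ip zk xs]ipC ?[ip y_ xs]ipC ?[ip gy_ xs]ipC ?[ip s xs]ipC ?[ip gy xs]ipC ?[ip sp xs]ipC ?[ip gs xs]ipC.
rewrite ?[ip y_ zk]ipC ?[ip gy_ zk]ipC ?[ip s zk]ipC ?[ip gy zk]ipC ?[ip sp zk]ipC ?[ip gs zk]ipC.
rewrite ?[ip gy_ y_]ipC ?[ip s y_]ipC ?[ip gy y_]ipC ?[ip sp y_]ipC ?[ip gs y_]ipC.
rewrite ?[ip s gy_]ipC ?[ip gy gy_]ipC ?[ip sp gy_]ipC ?[ip gs gy_]ipC.
rewrite ?[ip gy s]ipC ?[ip sp s]ipC ?[ip gs s]ipC.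
rewrite ?[ip sp gy]ipC ?[ip gs gy]ipC.
rewrite ?[ip gs sp]ipC.
rewrite hs hb hA hP /q.
field.
have hL0 : L != 0 by rewrite gt_eqF.
have hLmu : 0 < L - mu by rewrite subr_gt0.
have h1 : 0 < L - mu * d ^+ 2.
  have -> : L - mu * d ^+ 2 = L * (1 - mu / L * d ^+ 2) by field.
  by rewrite mulr_gt0.
have h2 : 0 < d * (L + mu) + 2 * L.
  by rewrite addr_gt0 // ?mulr_gt0 // addr_gt0.
by rewrite hL0 !gt_eqF.
Qed.

End IP.

Section IP2.
Variables (R : realType) (H : lmodType R) (ip : H -> H -> R).
Hypothesis ipC : forall u v, ip u v = ip v u.
Hypothesis ipL : forall a x y z, ip (a *: x + y) z = a * ip x z + ip y z.
Variables (L mu A P b d sg : R).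
Let q := mu / L.
Hypotheses (hL : 0 < L) (hmu : 0 < mu) (hmuL : mu < L).
Hypotheses (hb : b = A / ((1 - q) * P)) (hP : P = d ^+ 2 / (1 - q * d ^+ 2))
  (hA : A = d * ((1 - q) ^+ 2 * P - 4) / (d * (1 + q) + 2))
  (hs : sg = 1 + A / d) (hd : 0 < d) (hqd : 0 < 1 - q * d ^+ 2).
Local Notation Ifr := (@Ifr R H ip L mu).
Lemma core_le (xs zk y_ gy_ s gy sp gs xk : H) (fy_ fy fs gz gz1 gx : R)
  (hxk : b *: xk = b *: (y_ - L^-1 *: gy_ - L^-1 *: s))
  (ipge0 : forall u, 0 <= ip u u) (hA0 : 0 <= A) (hAP : A <= P) :
  let y := (1 - b) *: zk + b *: xk in
  let zk1 := (1 - q * d) *: zk + (q * d) *: y - (d / L) *: gy - (d / L) *: sp in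
  0 <= Ifr y_ gy_ fy_ y gy fy -> 0 <= Ifr y gy fy xs gs fs -> 0 <= Ifr xs gs fs y gy fy ->
  0 <= (sg - 1) * (gz1 - gz - ip s (zk1 - zk)) ->
  0 <= gz1 - gx + ip gs (zk1 - xs) ->
  0 <= gx - gz1 - ip sp (xs - zk1) ->
  (L + mu * P) * ip (zk1 - xs) (zk1 - xs) <=
  (1 - q) * A * Ifr y_ gy_ fy_ xs gs fs + q * A * (gx - gz - ip s (xs - zk))
  + (q * A + 1 - sg) * (gz - gx - ip (- gs) (zk - xs))
  + A / (2 * L) * ip (s - - gs) (s - - gs) + (L + mu * A) * ip (zk - xs) (zk - xs).
Proof.
move=> y zk1 I1 I2 I3 J1 J2 J3.
rewrite -subr_ge0 (@core_eq R H ip ipC ipL L mu A P b d sg hL hmu hmuL hb hP hA hs hd hqd xs zk y_ gy_ s gy sp gs xk fy_ fy fs gz gz1 gx hxk) -/y -/zk1.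
have hq1 : 0 < 1 - q by rewrite subr_gt0 /q ltr_pdivrMr // mul1r.
have hq0 : 0 < q by rewrite /q divr_gt0.
have hP0 : 0 <= P := le_trans hA0 hAP.
have ha : 0 <= 2 * d * (1 + q * P).
  apply: mulr_ge0; first by apply: mulr_ge0 => //; exact: ltW.
  by apply: addr_ge0 => //; apply: mulr_ge0 => //; exact: ltW.
have has : 0 <= 2 * d * (1 + q * P) - sg + 1.
  have -> : 2 * d * (1 + q * P) - sg + 1 = (2 * P - A) / d.
    rewrite hs hP /q; field.
    have hL0 : L != 0 by rewrite gt_eqF.
    have h1 : 0 < L - mu * d ^+ 2.
      have -> : L - mu * d ^+ 2 = L * (1 - mu / L * d ^+ 2) by field.
      by rewrite mulr_gt0.
    by rewrite hL0 !gt_eqF.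
  apply: divr_ge0; last exact: ltW.
  rewrite subr_ge0; apply: (le_trans hAP); rewrite mulr_natl mulr2n lerDl //.
rewrite -/q.
have hPA : 0 <= P - A by rewrite subr_ge0.
have hPA2 : 0 <= P - A / 2.
  rewrite subr_ge0 (le_trans _ hAP) // ler_pdivrMr // ler_peMr //.
  by rewrite ler1n.
have hd0 := ltW hd; have hL' := ltW hL; have hq1' := ltW hq1.
repeat apply: addr_ge0 => //; apply: mulr_ge0 => //;
  repeat first [ done | apply: mulr_ge0 | apply: divr_ge0 ].
all: by rewrite invr_ge0 // mulr_ge0.
Qed.
End IP2.

Section An.
Variables (R : realType) (H : lmodType R) (ip : H -> H -> R).
Hypothesis ipC : forall u v, ip u v = ip v u.
Hypothesis ipL : forall a x y z, ip (a *: x + y) z = a * ip x z + ip y z.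
Hypothesis ipge0 : forall x, 0 <= ip x x.
Hypothesis ipdef : forall x, ip x x = 0 -> x = 0.

Lemma ip0l' v : ip 0 v = 0.
Proof.
have := ipL 1 0 0 v; rewrite scale1r addr0 mul1r => h.
by have := congr1 (fun t => t - ip 0 v) h; rewrite /= subrr addrK.
Qed.
Lemma ip0r' v : ip v 0 = 0.
Proof. by rewrite ipC ip0l'. Qed.
Lemma ipDl' u w v : ip (u + w) v = ip u v + ip w v.
Proof. by rewrite -{1}[u]scale1r ipL mul1r. Qed.
Lemma ipZl' a u v : ip (a *: u) v = a * ip u v.
Proof. by rewrite -[a *: u]addr0 ipL ip0l' addr0. Qed.
Lemma ipNl' u v : ip (- u) v = - ip u v.
Proof. by rewrite -scaleN1r ipZl' mulN1r. Qed.
Lemma ipDr' u w v : ip v (u + w) = ip v u + ip v w.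
Proof. by rewrite ipC ipDl' !(ipC v). Qed.
Lemma ipZr' a u v : ip v (a *: u) = a * ip v u.
Proof. by rewrite ipC ipZl' ipC. Qed.
Lemma ipNr' u v : ip v (- u) = - ip v u.
Proof. by rewrite ipC ipNl' ipC. Qed.

Local Notation nrm := (nrm ip).

Lemma nrm2 u : nrm u ^+ 2 = ip u u.
Proof. by rewrite /nrm sqr_sqrtr. Qed.
Lemma nrm_ge0 u : 0 <= nrm u.
Proof. exact: sqrtr_ge0. Qed.
Lemma nrmZ t u : nrm (t *: u) = `|t| * nrm u.
Proof.
by rewrite /nrm ipZl' ipZr' mulrA -expr2 sqrtrM ?sqrtr_sqr // sqr_ge0.
Qed.

Lemma CS u v : ip u v <= nrm u * nrm v.
Proof.
have key : ip u v ^+ 2 <= ip u u * ip v v.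
  case: (eqVneq (ip v v) 0) => [/ipdef -> | hv].
    by rewrite ip0r' ip0l' expr0n /= mulr0.
  have hc : 0 < ip v v by rewrite lt_def hv ipge0.
  have E : ip (ip v v *: u - ip u v *: v) (ip v v *: u - ip u v *: v)
         = ip v v * (ip v v * ip u u - ip u v ^+ 2).
    rewrite !(ipDl', ipDr', ipZl', ipZr', ipNl', ipNr') (ipC v u); ring.
  move: (ipge0 (ip v v *: u - ip u v *: v)); rewrite E pmulr_rge0 // subr_ge0.
  by rewrite mulrC.
apply: (le_trans (ler_norm _)); rewrite -sqrtr_sqr /nrm -sqrtrM //.
exact: ler_wsqrtr.
Qed.

Lemma small (X c t0 : R) : 0 < t0 ->
  (forall t, 0 < t -> t <= t0 -> X <= c * t) -> X <= 0.
Proof.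
move=> ht0 h; rewrite leNgt; apply/negP => hX.
set t := Num.min t0 (X / (`|c| + 1)).
have hc1 : 0 < `|c| + 1 by rewrite ltr_pwDr.
have htp : 0 < t by rewrite lt_min ht0 divr_gt0.
have hXt := h t htp ltac:(by rewrite ge_min lexx).
have : c * t <= `|c| * t by rewrite ler_pM2r // ler_norm.
have : `|c| * t <= `|c| * (X / (`|c| + 1)) by rewrite ler_wpM2l // ge_min lexx orbT.
have : `|c| * (X / (`|c| + 1)) < X.
  rewrite mulrA ltr_pdivrMr // mulrC ltr_pM2l //; lra.
lra.
Qed.

Lemma archi_small (X K : R) : 0 <= K ->
  (forall n : nat, (0 < n)%N -> X <= K / n%:R) -> X <= 0.
Proof.
move=> hK h; rewrite leNgt; apply/negP => hX.
have hKX : 0 <= K / X by rewrite divr_ge0 // ltW.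
set n := (Num.bound (K / X)).+1.
have hn : 0 < n%:R :> R by rewrite ltr0n.
have := h n isT; rewrite ler_pdivlMr // => hXn.
have : K / X < n%:R.
  apply: (lt_le_trans (archi_boundP hKX)); rewrite ler_nat //.
rewrite ltr_pdivrMr // => hh; lra.
Qed.


Lemma fo_sc mu f gf : 0 <= mu -> strongly_convex ip mu f -> is_gradient ip f gf ->
  forall u v, f v + ip (gf v) (u - v) + mu / 2 * nrm (u - v) ^+ 2 <= f u.
Proof.
move=> hmu hsc hgr u v.
set D := nrm (u - v).
have hD0 : 0 <= D by exact: nrm_ge0.
set X := f v + ip (gf v) (u - v) + mu / 2 * D ^+ 2 - f u.
suff : X <= 0 by rewrite /X subr_le0.
have step : forall eps, 0 < eps -> X - eps * D <= 0.
  move=> eps heps.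
  have [dl hdl hg] := hgr v eps heps.
  have hD1 : 0 < D + 1 by lra.
  apply: (@small _ (mu / 2 * D ^+ 2) (Num.min 1 (dl / (D + 1)))).
    by rewrite lt_min ltr01 divr_gt0.
  move=> t ht0; rewrite le_min => /andP[ht1 htd].
  have htD : t * D < dl.
    move: htd; rewrite ler_pdivlMr // => htd.
    apply: (lt_le_trans _ htd); rewrite ltr_pM2l //; lra.
  have hnh : nrm (t *: (u - v)) < dl by rewrite nrmZ (gtr0_norm ht0).
  have := hg _ hnh; rewrite nrmZ (gtr0_norm ht0) ipZr' ler_norml => /andP[h1 h2].
  have hv : v + t *: (u - v) = t *: u + (1 - t) *: v.
    by rewrite scalerBl scale1r scalerBr addrCA.
  have ht01 : 0 <= t <= 1 by rewrite ht1 ltW.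
  have := hsc u v t ht01; rewrite -hv -/D => hc.
  have : t * (X - eps * D) <= t * (mu / 2 * D ^+ 2 * t).
    rewrite -/D in h1; rewrite /X; lra.
  by rewrite ler_pM2l.
apply: (@small _ D 1 ltr01) => eps heps _.
have := step eps heps; lra.
Qed.

Lemma descent L f gf : 0 <= L ->
  (forall u v, f v + ip (gf v) (u - v) <= f u) ->
  (forall x y, nrm (gf x - gf y) <= L * nrm (x - y)) ->
  forall x y, f y <= f x + ip (gf x) (y - x) + L / 2 * nrm (y - x) ^+ 2.
Proof.
move=> hL hcv hlip x y.
set d := y - x.
set N := nrm d.
have hN0 : 0 <= N by exact: nrm_ge0.
have key : forall n : nat, (0 < n)%N -> forall m : nat,
  f (x + (m%:R / n%:R) *: d) - f x <=
    m%:R / n%:R * ip (gf x) d + L * N ^+ 2 * (m%:R * (m%:R + 1)) / (2 * n%:R ^+ 2).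
  move=> n hn; have hn0 : 0 < n%:R :> R by rewrite ltr0n.
  elim=> [|m IH].
    have -> : (0%:R : R) = 0 by [].
    by rewrite !(mul0r, mulr0, scale0r, addr0, subrr, add0r).
  set p := x + (m%:R / n%:R) *: d.
  set p' := x + (m.+1%:R / n%:R) *: d.
  have h1 := hcv p p'.
  have E1 : p - p' = (- n%:R^-1) *: d.
    rewrite /p /p' -natr1 opprD addrACA subrr add0r -scalerBl.
    by congr (_ *: _); field; rewrite gt_eqF.
  have E2 : p' - x = (m.+1%:R / n%:R) *: d by rewrite /p' addrC addKr.
  have hcs : ip (gf p' - gf x) d <= L * (m.+1%:R / n%:R * N) * N.
    apply: (le_trans (CS _ _)); rewrite -/N; apply: ler_wpM2r => //.
    apply: (le_trans (hlip _ _)); rewrite E2 nrmZ ger0_norm //.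
    by rewrite divr_ge0 // ler0n.
  move: h1; rewrite E1 ipZr' => h1.
  have E3 : ip (gf p') d = ip (gf x) d + ip (gf p' - gf x) d.
    by rewrite ipDl' ipNl' addrC subrK.
  rewrite -natr1 in hcs IH *.
  have hcs' : n%:R^-1 * ip (gf p' - gf x) d <= n%:R^-1 * (L * ((m%:R + 1) / n%:R * N) * N).
    by rewrite ler_pM2l // invr_gt0.
  rewrite E3 in h1.
  have -> : (m%:R + 1) / n%:R * ip (gf x) d +
    L * N ^+ 2 * ((m%:R + 1) * (m%:R + 1 + 1)) / (2 * n%:R ^+ 2) =
    (m%:R / n%:R * ip (gf x) d + L * N ^+ 2 * (m%:R * (m%:R + 1)) / (2 * n%:R ^+ 2))
    + n%:R^-1 * ip (gf x) d + n%:R^-1 * (L * ((m%:R + 1) / n%:R * N) * N).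
    by field; rewrite gt_eqF.
  lra.
have : f y - f x - ip (gf x) d - L / 2 * N ^+ 2 <= 0.
  apply: (@archi_small _ (L / 2 * N ^+ 2)).
    by rewrite mulr_ge0 ?divr_ge0 // sqr_ge0.
  move=> n hn; have hn0 : 0 < n%:R :> R by rewrite ltr0n.
  have Exd : x + d = y by rewrite /d addrC subrK.
  have := key n hn n; rewrite divff ?gt_eqF // scale1r Exd.
  have -> : 1 * ip (gf x) d + L * N ^+ 2 * (n%:R * (n%:R + 1)) / (2 * n%:R ^+ 2)
    = ip (gf x) d + L / 2 * N ^+ 2 + L / 2 * N ^+ 2 / n%:R.
    by field; rewrite gt_eqF.
  lra.
lra.
Qed.

Lemma interp L mu f gf : 0 < mu -> mu < L -> strongly_convex ip mu f ->
  L_smooth ip L f gf -> forall u v, 0 <= If ip L mu gf f u v.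
Proof.
move=> hmu hmuL hsc [hgr hlip] u v.
have fo := @fo_sc mu f gf (ltW hmu) hsc hgr.
have cv : forall u v, f v + ip (gf v) (u - v) <= f u.
  move=> a b; apply: le_trans (fo a b); rewrite lerDl; apply: mulr_ge0.
    by rewrite divr_ge0 // ltW.
  exact: sqr_ge0.
have hL : 0 <= L by rewrite ltW // (lt_trans hmu).
have desc := @descent L f gf hL cv hlip.
set G := gf u - gf v - mu *: (u - v).
set w := u - (L - mu)^-1 *: G.
have hA := fo w v.
have hB := desc u w.
suff -> : If ip L mu gf f u v =
  (f u + ip (gf u) (w - u) + L / 2 * nrm (w - u) ^+ 2 - f w) +
  (f w - (f v + ip (gf v) (w - v) + mu / 2 * nrm (w - v) ^+ 2)).
  by apply: addr_ge0; rewrite subr_ge0.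
rewrite /If !nrm2 /w /G.
set gu := gf u; set gv := gf v; set fw := f _.
rewrite !(ipDl', ipDr', ipZl', ipZr', ipNl', ipNr').
rewrite ?[ip v u]ipC ?[ip gu u]ipC ?[ip gv u]ipC ?[ip gu v]ipC ?[ip gv v]ipC ?[ip gv gu]ipC.
have hLm : L - mu != 0 by rewrite subr_eq0 gt_eqF.
field.
by rewrite hLm.
Qed.

Lemma prox_fin g gam vv p : no_minus_infty g -> proper_fun g ->
  is_prox ip g gam vv p -> g p = (fine (g p))%:E.
Proof.
move=> hninf [x0 hx0] hp.
have := hp x0; have := hninf p.
case: (g p) => [r| | ] //.
move=> _; case: (g x0) hx0 => [r0| | ] //; try by rewrite ltxx.
all: by move=> _; rewrite addye // -?EFinD leye_eq.
Qed.

Lemma prox_sub g gam vv p : 0 < gam -> no_minus_infty g -> proper_fun g ->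
  convex_efun g -> is_prox ip g gam vv p ->
  forall u, ((fine (g p) + ip (gam^-1 *: (vv - p)) (u - p))%:E <= g u)%E.
Proof.
move=> hgam hninf hprop hcv hp u.
have Ep := @prox_fin g gam vv p hninf hprop hp.
set r := fine (g p).
have := hninf u.
case Eu: (g u) => [gu| |] //= _; last by rewrite leey.
rewrite lee_fin.
set c := (2 * gam)^-1.
have hc : 0 <= c by rewrite invr_ge0 mulr_ge0 // ltW.
set X := r + ip (gam^-1 *: (vv - p)) (u - p) - gu.
suff : X <= 0 by rewrite /X subr_le0.
apply: (@small _ (c * ip (u - p) (u - p)) 1 ltr01) => t ht0 ht1.
set w := t *: u + (1 - t) *: p.
have ht01 : 0 <= t <= 1 by rewrite ht1 ltW.
have hcw := hcv u p t ht01; rewrite -/w Eu Ep -!EFinM -EFinD in hcw.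
have hpw := hp w; rewrite Ep in hpw.
have := hninf w.
case Ew: (g w) hcw hpw => [gw| |] //= hcw hpw _.
rewrite ?lee_fin in hcw.
rewrite -?EFinD ?lee_fin in hpw.
rewrite !nrm2 in hpw.
have Evw : vv - w = (vv - p) - t *: (u - p).
  by rewrite /w scalerBl scale1r scalerBr !opprD !opprK !addrA; congr (_ + _);
    exact: addrAC.
rewrite Evw in hpw.
rewrite /X !(ipDl', ipDr', ipZl', ipZr', ipNl', ipNr') in hpw *.
rewrite ?[ip p u]ipC ?[ip vv u]ipC ?[ip vv p]ipC in hpw *.
have Ec : gam^-1 = 2 * c by rewrite /c invfM mulrA divff ?mul1r // pnatr_eq0.
rewrite Ec -/c -/r in hpw hcw *.
rewrite -(ler_pM2l ht0).
lra.
Qed.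

Lemma opt_sub L f gf g xs :
  (forall x y, f y <= f x + ip (gf x) (y - x) + L / 2 * nrm (y - x) ^+ 2) ->
  no_minus_infty g -> proper_fun g -> convex_efun g ->
  is_minimizer (fun u => ((f u)%:E + g u)%E) xs ->
  (g xs = (fine (g xs))%:E) /\
  (forall u, ((fine (g xs) - ip (gf xs) (u - xs))%:E <= g u)%E).
Proof.
move=> desc hninf [x0 hx0] hcv hxs.
have Ex : g xs = (fine (g xs))%:E.
  have := hxs x0; have := hninf xs; rewrite /=.
  case: (g xs) => [r| | ] //.
  move=> _; case: (g x0) hx0 => [r0| | ] hx0 h.
  - by move: h; rewrite addey // -EFinD leye_eq.
  - by rewrite ltxx in hx0.
  - by move: h; rewrite addey // addeNy leye_eq.
split => // u.
set gx := fine (g xs).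
have := hninf u.
case Eu: (g u) => [gu| |] //= _; last by rewrite leey.
rewrite lee_fin.
set X := gx - ip (gf xs) (u - xs) - gu.
suff : X <= 0 by rewrite /X subr_le0.
apply: (@small _ (L / 2 * ip (u - xs) (u - xs)) 1 ltr01) => t ht0 ht1.
set w := t *: u + (1 - t) *: xs.
have ht01 : 0 <= t <= 1 by rewrite ht1 ltW.
have hcw := hcv u xs t ht01; rewrite -/w Eu Ex -/gx -!EFinM -EFinD in hcw.
have hw := hxs w; rewrite /= Ex -/gx in hw.
have := hninf w.
case Ew: (g w) hcw hw => [gw| |] //= hcw hw _.
rewrite ?lee_fin in hcw.
rewrite -?EFinD ?lee_fin in hw.
have Ewx : w - xs = t *: (u - xs).
  by rewrite /w scalerBl scale1r scalerBr addrCA addrAC subrr add0r.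
have hd := desc xs w.
rewrite Ewx nrmZ (gtr0_norm ht0) ipZr' exprMn nrm2 in hd.
rewrite -(ler_pM2l ht0) /X.
nra.
Qed.
End An.
Arguments Ifr {R H}.

Lemma params (R : realType) (q : R) (k : nat) : 0 < q -> q < 1 ->
  let A := Aseq q k in let P := Aseq q k.+1 in
  let sg := sigma q k in let d := delta q k in let b := beta q k in
  [/\ 0 <= A, A <= P, b = A / ((1 - q) * P), P = d ^+ 2 / (1 - q * d ^+ 2) &
      A = d * ((1 - q) ^+ 2 * P - 4) / (d * (1 + q) + 2)] /\
  [/\ sg = 1 + A / d, 0 < d, 0 < 1 - q * d ^+ 2 & 1 <= sg].
Proof.
move=> hq0 hq1 A P sg d b.
have Age0 : forall j, 0 <= Aseq q j.
  elim=> [|j IH] //=.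
  apply: divr_ge0; last exact: sqr_ge0.
  apply: addr_ge0; first by rewrite mulr_ge0 // addr_ge0 // ltW.
  by rewrite mulr_ge0 // addr_ge0 // sqrtr_ge0.
have hA0 : 0 <= A := Age0 k.
have hq1' : 0 < 1 - q by rewrite subr_gt0.
have hq2 : 0 < (1 - q) ^+ 2 by rewrite exprn_gt0.
have hP : (1 - q) ^+ 2 * P = (1 + q) * A + 2 * (1 + sg).
  by rewrite /P /= -/A /sg /sigma -/A; field; rewrite gt_eqF.
have hs1 : 1 <= sg.
  rewrite /sg /sigma -/A -{1}(sqrtr1 R); apply: ler_wsqrtr; nra.
have hs2 : sg ^+ 2 = (1 + A) * (1 + q * A).
  by rewrite /sg /sigma -/A sqr_sqrtr //; nra.
have hPpos : 0 < P.
  have : 0 < (1 - q) ^+ 2 * P.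
    rewrite hP; nra.
  by rewrite pmulr_rgt0.
have hAP : A <= P.
  have : (1 - q) ^+ 2 * A <= (1 - q) ^+ 2 * P.
    rewrite hP; nra.
  by rewrite ler_pM2l.
have hqP : 0 < 1 + q * P by rewrite ltr_pwDr // mulr_gt0.
have hd2 : d ^+ 2 = P / (1 + q * P).
  by rewrite /d /delta sqr_sqrtr // divr_ge0 // ltW.
have hdpos : 0 < d.
  by rewrite /d /delta sqrtr_gt0 divr_gt0.
have hqd : 0 < 1 - q * d ^+ 2.
  rewrite hd2.
  have -> : 1 - q * (P / (1 + q * P)) = (1 + q * P)^-1 by field; rewrite gt_eqF.
  by rewrite invr_gt0.
have hPd : P = d ^+ 2 / (1 - q * d ^+ 2).
  rewrite hd2; field.
  by rewrite gt_eqF //= addrK oner_neq0.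
have hX : P * ((sg - 1) ^+ 2 - q * A ^+ 2) = A ^+ 2.
  have E : (sg - 1) ^+ 2 - q * A ^+ 2 = 2 + (1 + q) * A - 2 * sg by lra.
  apply: (mulfI (lt0r_neq0 hq2)); rewrite mulrA hP E; lra.
have hY : P * (sg - 1) ^+ 2 = A ^+ 2 * (1 + q * P) by lra.
have hdsA : d * (sg - 1) = A.
  apply/eqP; rewrite -(@eqrXn2 _ 2) //; last by rewrite mulr_ge0 ?subr_ge0 // ltW.
  by rewrite exprMn hd2 mulrAC hY mulfK // gt_eqF.
have hsd : sg = 1 + A / d.
  by rewrite -hdsA; field; rewrite gt_eqF.
split; split => //.
- by rewrite hP hsd; field; rewrite ?gt_eqF //; nra.
Qed.

Lemma core_le' (R : realType) (H : lmodType R) (ip : H -> H -> R)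
  (ipC : forall u v, ip u v = ip v u)
  (ipL : forall a x y z, ip (a *: x + y) z = a * ip x z + ip y z)
  (L mu A P b d sg : R) (hL : 0 < L) (hmu : 0 < mu) (hmuL : mu < L)
  (hb : b = A / ((1 - mu / L) * P)) (hP : P = d ^+ 2 / (1 - mu / L * d ^+ 2))
  (hA : A = d * ((1 - mu / L) ^+ 2 * P - 4) / (d * (1 + mu / L) + 2))
  (hs : sg = 1 + A / d) (hd : 0 < d) (hqd : 0 < 1 - mu / L * d ^+ 2)
  (xs zk y_ gy_ s gy sp gs xk y zk1 : H) (fy_ fy fs gz gz1 gx : R)
  (hxk : b *: xk = b *: (y_ - L^-1 *: gy_ - L^-1 *: s))
  (ipge0 : forall u, 0 <= ip u u) (hA0 : 0 <= A) (hAP : A <= P)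
  (hy : y = (1 - b) *: zk + b *: xk)
  (hz : zk1 = (1 - mu / L * d) *: zk + (mu / L * d) *: y - (d / L) *: gy - (d / L) *: sp) :
  0 <= Ifr ip L mu y_ gy_ fy_ y gy fy -> 0 <= Ifr ip L mu y gy fy xs gs fs ->
  0 <= Ifr ip L mu xs gs fs y gy fy ->
  0 <= (sg - 1) * (gz1 - gz - ip s (zk1 - zk)) ->
  0 <= gz1 - gx + ip gs (zk1 - xs) ->
  0 <= gx - gz1 - ip sp (xs - zk1) ->
  (L + mu * P) * ip (zk1 - xs) (zk1 - xs) <=
  (1 - mu / L) * A * Ifr ip L mu y_ gy_ fy_ xs gs fs + mu / L * A * (gx - gz - ip s (xs - zk))
  + (mu / L * A + 1 - sg) * (gz - gx - ip (- gs) (zk - xs))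
  + A / (2 * L) * ip (s - - gs) (s - - gs) + (L + mu * A) * ip (zk - xs) (zk - xs).
Proof.
subst zk1 y.
exact: (@core_le R H ip ipC ipL L mu A P b d sg hL hmu hmuL hb hP hA hs hd hqd xs zk y_ gy_ s gy sp gs xk fy_ fy fs gz gz1 gx hxk ipge0 hA0 hAP).
Qed.

Lemma assemble (R : realType) (H : lmodType R) (ip : H -> H -> R)
  (hH : is_hilbert ip)
  (mu L : R) (hmu : 0 < mu) (hmuL : mu < L)
  (f : H -> R) (gf : H -> H)
  (hfconv : strongly_convex ip mu f) (hfsmooth : L_smooth ip L f gf)
  (g : H -> \bar R) (hgninf : no_minus_infty g) (hgproper : proper_fun g)
  (hgconv : convex_efun g)
  (xs : H) (hxs : is_minimizer (fun u => ((f u)%:E + g u)%E) xs)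
  (x z : nat -> H) (hit : prox_item ip L mu gf x z g) (k : nat) (gz : R)
  (HI1 : ((mu / L * Aseq (mu / L) k)%:E * Ig ip g xs (z k) (sg L mu gf x z k) =
          (mu / L * Aseq (mu / L) k * (fine (g xs) - gz - ip (sg L mu gf x z k) (xs - z k)))%:E)%E)
  (HI2 : ((mu / L * Aseq (mu / L) k + 1 - sigma (mu / L) k)%:E * Ig ip g (z k) xs (- gf xs) =
          ((mu / L * Aseq (mu / L) k + 1 - sigma (mu / L) k) *
            (gz - fine (g xs) - ip (- gf xs) (z k - xs)))%:E)%E)
  (J1 : 0 <= (sigma (mu / L) k - 1) *
          (fine (g (z k.+1)) - gz - ip (sg L mu gf x z k) (z k.+1 - z k)))
  (hxk : beta (mu / L) k *: x k = beta (mu / L) k *: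
          (yprev L mu x z k - L^-1 *: gf (yprev L mu x z k) - L^-1 *: sg L mu gf x z k)) :
  (((L + mu * Aseq (mu / L) k.+1) * nrm ip (z k.+1 - xs) ^+ 2)%:E
       <= Vk ip L mu gf x z f g xs k)%E.
Proof.
have [[ipC ipL ipge0 ipdef] _] := hH.
have hL : 0 < L := lt_trans hmu hmuL.
have hL0 : L != 0 := lt0r_neq0 hL.
have hq0 : 0 < mu / L by rewrite divr_gt0.
have hq1 : mu / L < 1 by rewrite ltr_pdivrMr // mul1r.
have [[hA0 hAP hb hPd hAd] [hs hd hqd hs1]] := @params R (mu / L) k hq0 hq1.
have fo := @fo_sc R H ip ipC ipL mu f gf (ltW hmu) hfconv hfsmooth.1.
have cv : forall u v, f v + ip (gf v) (u - v) <= f u.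
  move=> a b; apply: le_trans (fo a b); rewrite lerDl; apply: mulr_ge0.
    by rewrite divr_ge0 // ltW.
  exact: sqr_ge0.
have desc := @descent R H ip ipC ipL ipge0 ipdef L f gf (ltW hL) cv hfsmooth.2.
have itp := @interp R H ip ipC ipL ipge0 ipdef L mu f gf hmu hmuL hfconv hfsmooth.
have [Egx hopt] := @opt_sub R H ip ipC ipL ipge0 L f gf g xs desc hgninf hgproper hgconv hxs.
case: hit => hz0 hprox hx.
have hgam : 0 < delta (mu / L) k / L by rewrite divr_gt0.
have Egz1 := @prox_fin R H ip g _ _ _ hgninf hgproper (hprox k).
have psub := @prox_sub R H ip ipC ipL ipge0 g _ _ _ hgam hgninf hgproper hgconv (hprox k).
have Esp : (delta (mu / L) k / L)^-1 *: (zbar_next L mu gf x z k - z k.+1)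
    = sg L mu gf x z k.+1 by rewrite invf_div.
have n2 := @nrm2 R H ip ipC ipge0.
have EIf : forall u v, If ip L mu gf f u v = Ifr ip L mu u (gf u) (f u) v (gf v) (f v).
  by move=> u v; rewrite /If /Ifr !n2.
set d := delta (mu / L) k.
have Ezk1 : z k.+1 = (1 - mu / L * d) *: z k + (mu / L * d) *: yit L mu x z k
   - (d / L) *: gf (yit L mu x z k) - (d / L) *: sg L mu gf x z k.+1.
  have E : (d / L) *: sg L mu gf x z k.+1 = zbar_next L mu gf x z k - z k.+1.
    rewrite /sg /= scalerA -/d.
    have -> : d / L * (L * d^-1) = 1 by field; rewrite hL0 gt_eqF.
    by rewrite scale1r.
  by rewrite E /zbar_next -/d opprB addrCA subrr addr0.
unfold Vk; cbv zeta.
rewrite HI1 HI2 -!EFinD lee_fin !n2 !EIf.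
set yp := yprev L mu x z k.
set yk := yit L mu x z k.
apply: (@core_le' R H ip ipC ipL L mu _ _ _ _ _ hL hmu hmuL hb hPd hAd hs hd hqd
  xs (z k) yp (gf yp) (sg L mu gf x z k) (gf yk) (sg L mu gf x z k.+1) (gf xs) (x k)
  yk (z k.+1) (f yp) (f yk) (f xs) gz (fine (g (z k.+1))) (fine (g xs))
  hxk ipge0 hA0 hAP erefl Ezk1).
- by rewrite -EIf; apply: itp.
- by rewrite -EIf; apply: itp.
- by rewrite -EIf; apply: itp.
- exact: J1.
- by have := hopt (z k.+1); rewrite Egz1 lee_fin; lra.
- by have := psub xs; rewrite Esp Egx lee_fin; lra.
Qed.

Theorem lemma3 (R : realType) (H : lmodType R) (ip : H -> H -> R)
  (hH : is_hilbert ip)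
  (mu L : R) (hmu : 0 < mu) (hmuL : mu < L)
  (f : H -> R) (gf : H -> H)
  (hfconv : strongly_convex ip mu f) (hfsmooth : L_smooth ip L f gf)
  (g : H -> \bar R) (hgninf : no_minus_infty g) (hgproper : proper_fun g)
  (hgconv : convex_efun g) (hglsc : lsc_efun ip g)
  (xs : H) (hxs : is_minimizer (fun u => ((f u)%:E + g u)%E) xs)
  (hxsuniq : forall y, is_minimizer (fun u => ((f u)%:E + g u)%E) y -> y = xs)
  (x z : nat -> H) (hit : prox_item ip L mu gf x z g) :
  forall k : nat,
    (((L + mu * Aseq (mu / L) k.+1) * nrm ip (z k.+1 - xs) ^+ 2)%:E
       <= Vk ip L mu gf x z f g xs k)%E.
Proof.
have [[ipC ipL ipge0 ipdef] _] := hH.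
have hL : 0 < L := lt_trans hmu hmuL.
have hL0 : L != 0 := lt0r_neq0 hL.
have hq0 : 0 < mu / L by rewrite divr_gt0.
have hq1 : mu / L < 1 by rewrite ltr_pdivrMr // mul1r.
have hit' := hit.
case: hit' => hz0 hprox hx.
case=> [|k].
- apply: (@assemble R H ip hH mu L hmu hmuL f gf hfconv hfsmooth g hgninf hgproper
    hgconv xs hxs x z hit 0 (fine (g (z 0)))).
  + by rewrite /= mulr0 !mul0e mul0r.
  + by rewrite /sigma /= !mulr0 !addr0 mulr1 sqrtr1 add0r subrr !mul0e mul0r.
  + by rewrite /sigma /= !mulr0 !addr0 mulr1 sqrtr1 subrr mul0r.
  + by rewrite /beta /= !mul0r !scale0r.
- have fo := @fo_sc R H ip ipC ipL mu f gf (ltW hmu) hfconv hfsmooth.1.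
  have cv : forall u v, f v + ip (gf v) (u - v) <= f u.
    move=> a b; apply: le_trans (fo a b); rewrite lerDl; apply: mulr_ge0.
      by rewrite divr_ge0 // ltW.
    exact: sqr_ge0.
  have desc := @descent R H ip ipC ipL ipge0 ipdef L f gf (ltW hL) cv hfsmooth.2.
  have [Egx hopt] := @opt_sub R H ip ipC ipL ipge0 L f gf g xs desc hgninf hgproper hgconv hxs.
  have [[hA0 hAP hb hPd hAd] [hs hd hqd hs1]] := @params R (mu / L) k hq0 hq1.
  have hgam : 0 < delta (mu / L) k / L by rewrite divr_gt0.
  have Egz := @prox_fin R H ip g _ _ _ hgninf hgproper (hprox k).
  have psub := @prox_sub R H ip ipC ipL ipge0 g _ _ _ hgam hgninf hgproper hgconv (hprox k).
  have Esp : (delta (mu / L) k / L)^-1 *: (zbar_next L mu gf x z k - z k.+1)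
    = sg L mu gf x z k.+1 by rewrite invf_div.
  rewrite Esp in psub.
  have Egz2 := @prox_fin R H ip g _ _ _ hgninf hgproper (hprox k.+1).
  apply: (@assemble R H ip hH mu L hmu hmuL f gf hfconv hfsmooth g hgninf hgproper
    hgconv xs hxs x z hit k.+1 (fine (g (z k.+1)))).
  + by rewrite /Ig Egx Egz -!EFinB -EFinM.
  + by rewrite /Ig Egx Egz -!EFinB -EFinM.
  + have [[_ _ _ _ _] [_ _ _ hs1']] := @params R (mu / L) k.+1 hq0 hq1.
    apply: mulr_ge0; first by rewrite subr_ge0.
    by have := psub (z k.+2); rewrite Egz2 lee_fin; lra.
  + rewrite hx; congr (_ *: _).
    rewrite /yprev /= /sg /= scalerA mulKf //.
Qed.
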